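(* Let $N=\{1,\dots,n\}$, let $\boldsymbol{x}=(x_1,\dots,x_n)\in[0,1]^n$ be a profile of agent locations, let $s\in[0,1]$ be a facility location, and let $k$ be a positive integer with $k\le n$. Then the subgame $\Gamma_{\boldsymbol{x}}(s,k)$ has a (pure-strategy) Nash equilibrium, and in every Nash equilibrium of $\Gamma_{\boldsymbol{x}}(s,k)$ each agent $i\in N$ attains utility $1-|s-x_i|$ if $i\in N_k^*(\boldsymbol{x},s)$, and attains utility $0$ otherwise.
   Context: Distances are $d(a,b)=|a-b|$. Given $\boldsymbol{x}$ and $s$, agents are ordered by a priority relation $\triangleright$: agent $i$ has higher priority than agent $j$ if $|s-x_i|<|s-x_j|$; ties between equidistant agents are broken by a fixed deterministic rule, so $\triangleright$ is a complete strict order. $N_k^*(\boldsymbol{x},s)$ denotes the set of the $k$ highest-priority agents under $\triangleright$ (the ''$k$-closest'' agents). The subgame $\Gamma_{\boldsymbol{x}}(s,k)$ is the complete-information game in which each agent $i$ simultaneously chooses an action $a_i\in\{\emptyset,s\}$ ($a_i=s$ means travelling to the facility). Let $T=\{i: a_i=s\}$. If $|T|\le k$, all agents in $T$ are served; if $|T|>k$, the $k$ highest-priority agents of $T$ (under $\triangleright$) are served. A served agent $i$ gets utility $1-|s-x_i|$; an agent with $a_i=s$ who is not served gets $-|s-x_i|$; an agent with $a_i=\emptyset$ gets $0$. *)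

(* Defs.v *)
From mathcomp Require Import all_boot all_order all_algebra.
Set Implicit Arguments. Unset Strict Implicit. Unset Printing Implicit Defensive.
Import Order.TTheory GRing.Theory Num.Theory.
Local Open Scope ring_scope.

Section Game.
Variables (R : realFieldType) (n : nat).

(* Agents are 'I_n; x i is the location of agent i, s the facility.
   pr i j means "agent i has higher priority than agent j". *)

(* pr is a strict complete order on agents refining distance to s:
   the distance-based order with ties broken by some fixed deterministic
   rule. *)
Definition priority_order (x : 'I_n -> R) (s : R) (pr : rel 'I_n) : Prop :=
  [/\ (forall i, ~~ pr i i),
      (forall i j l, pr i j -> pr j l -> pr i l),
      (forall i j, i != j -> pr i j || pr j i) &
      (forall i j, `|s - x i| < `|s - x j| -> pr i j)].

Definition Nstar (pr : rel 'I_n) (k : nat) : {set 'I_n} :=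
  [set i | #|[set j | pr j i]| < k]%N.

(* An action profile: a i = true iff agent i travels to the facility. *)
Definition served (pr : rel 'I_n) (k : nat) (a : 'I_n -> bool) (i : 'I_n) : bool :=
  a i && (#|[set j | a j & pr j i]| < k)%N.

Definition utility (x : 'I_n -> R) (s : R) (pr : rel 'I_n) (k : nat)
    (a : 'I_n -> bool) (i : 'I_n) : R :=
  if a i then
    (if served pr k a i then 1 - `|s - x i| else - `|s - x i|)
  else 0.

Definition deviate (a : 'I_n -> bool) (i : 'I_n) (b : bool) : 'I_n -> bool :=
  fun j => if j == i then b else a j.

Definition nash_eq (x : 'I_n -> R) (s : R) (pr : rel 'I_n) (k : nat)
    (a : 'I_n -> bool) : Prop :=
  forall (i : 'I_n) (b : bool),
    utility x s pr k (deviate a i b) i <= utility x s pr k a i.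

End Game.

(* Main.v *)
Require Import Defs.
From mathcomp Require Import all_boot all_order all_algebra.
From mathcomp Require Import lra.
Import Order.TTheory GRing.Theory Num.Theory.
Local Open Scope ring_scope.

Lemma pr_asym (R : realFieldType) (n : nat) (x : 'I_n -> R) (s : R) (pr : rel 'I_n) :
  priority_order x s pr -> forall i j, pr i j -> ~~ pr j i.
Proof.
case=> irr tr _ _ i j hij; apply/negP => hji.
by move: (irr i); rewrite (tr _ _ _ hij hji).
Qed.

Lemma card_Nstar (R : realFieldType) (n : nat) (x : 'I_n -> R) (s : R) (pr : rel 'I_n) (k : nat) :
  priority_order x s pr -> (k <= n)%N -> (k <= #|Nstar pr k|)%N.
Proof.
move=> hpo hkn; have [irr tr tot _] := hpo.
pose rk (j : 'I_n) := #|[set l | pr l j]|.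
have rklt j : (rk j < n)%N.
  rewrite /rk -[X in (_ < X)%N](card_ord n).
  apply: proper_card; apply/properP; split.
    by apply/subsetP => l _.
  by exists j => //; rewrite inE irr.
pose f j := Ordinal (rklt j).
have finj : injective f.
  move=> i j /(congr1 val) /= e; apply/eqP/negPn/negP => nij.
  have lt : forall a b, pr a b -> (rk a < rk b)%N.
    move=> a b hab; apply: proper_card; apply/properP; split.
      apply/subsetP => l; rewrite !inE => hla; exact: tr hla hab.
    by exists a; rewrite !inE ?hab ?irr.
  by case/orP: (tot _ _ nij) => /lt; rewrite e ltnn.
have -> : Nstar pr k = f @^-1: [set r : 'I_n | (r < k)%N].
  by apply/setP => j; rewrite !inE.
rewrite card_preimset //.
have Hk : #|[set widen_ord hkn r | r : 'I_k]| = k.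
  by rewrite card_imset ?card_ord // => a b /(congr1 val) /= /val_inj.
rewrite -{1}Hk.
apply: subset_leq_card; apply/subsetP => r /imsetP [t _ ->].
by rewrite inE /=; case: t.
Qed.

Arguments card_Nstar {R n x s pr k}.

Lemma Nstar_prec (R : realFieldType) (n : nat) (x : 'I_n -> R) (s : R) (pr : rel 'I_n) (k : nat) i j :
  priority_order x s pr -> j \in Nstar pr k -> i \notin Nstar pr k -> pr j i.
Proof.
move=> hpo; have [irr tr tot _] := hpo.
rewrite !inE -leqNgt => hj hi.
have nij : j != i by apply/eqP => e; move: hj; rewrite e ltnNge hi.
case/orP: (tot _ _ nij) => // hij.
exfalso; move: hj; rewrite ltnNge; move/negP; apply.
apply: leq_trans hi _; apply: subset_leq_card; apply/subsetP => l.
rewrite !inE => hl; exact: tr hl hij.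
Qed.

Arguments Nstar_prec {R n x s pr k i j}.
Arguments pr_asym {R n x s pr}.

Theorem proposition3p1 (R : realFieldType) (n : nat) (x : 'I_n -> R) (s : R)
    (k : nat) (pr : rel 'I_n) :
  (forall i, 0 <= x i <= 1) -> 0 <= s <= 1 ->
  (0 < k)%N -> (k <= n)%N ->
  priority_order x s pr ->
  (exists a : 'I_n -> bool, nash_eq x s pr k a) /\
  (forall a : 'I_n -> bool, nash_eq x s pr k a ->
     forall i : 'I_n,
       utility x s pr k a i = if i \in Nstar pr k then 1 - `|s - x i| else 0).
Proof.
move=> hx hs hk hkn hpo; have [irr tr tot hd] := hpo.
have d1 : forall i, `|s - x i| <= 1.
  move=> i; have /andP[? ?] := hx i; move: hs => /andP[? ?].
  rewrite ler_norml; apply/andP; split; lra.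
have d0 : forall i, 0 <= `|s - x i| by [].
have ule : forall a i, utility x s pr k a i <= 1 - `|s - x i|.
  move=> a i; rewrite /utility; have := d1 i; have := d0 i.
  case: (a i); case: (served pr k a i) => ? ?; lra.
have servN : forall (a : 'I_n -> bool) i, i \in Nstar pr k -> a i -> served pr k a i.
  move=> a i; rewrite inE => hi ai; rewrite /served ai /=.
  apply: leq_ltn_trans hi; apply: subset_leq_card; apply/subsetP => l.
  by rewrite !inE => /andP[].
have devi : forall (a : 'I_n -> bool) i b, deviate a i b i = b by move=> a i b; rewrite /deviate eqxx.
split.
  exists (fun j => j \in Nstar pr k) => i b.
  case hi: (i \in Nstar pr k).
    have -> : utility x s pr k (fun j => j \in Nstar pr k) i = 1 - `|s - x i|.
      by rewrite /utility hi servN.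
    exact: ule.
  have -> : utility x s pr k (fun j => j \in Nstar pr k) i = 0 by rewrite /utility hi.
  rewrite /utility devi; case: b => //.
  have -> : served pr k (deviate (fun j => j \in Nstar pr k) i true) i = false.
    rewrite /served devi /=; apply/negbTE; rewrite -leqNgt.
    apply: (leq_trans (card_Nstar hpo hkn)); apply: subset_leq_card.
    apply/subsetP => j hj; rewrite inE /deviate.
    case: eqP => [e|_]; first by move: hj; rewrite e hi.
    by rewrite hj (Nstar_prec hpo hj) ?hi.
  by rewrite oppr_le0.
move=> a hne i.
have uge0 : forall j, 0 <= utility x s pr k a j.
  by move=> j; have := hne j false; rewrite /utility devi.
case hi: (i \in Nstar pr k).
  apply/eqP; rewrite eq_le ule /=.
  have := hne i true; rewrite /utility devi servN ?devi //.
have := uge0 i; rewrite /utility.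
case ai: (a i) => //.
case si: (served pr k a i) => h; last first.
  have e : `|s - x i| = 0 by apply/eqP; rewrite eq_le d0 andbT -oppr_ge0.
  by rewrite e oppr0.
have [j jN ajf] : exists2 j, j \in Nstar pr k & a j = false.
  case: (pickP [pred j | (j \in Nstar pr k) && ~~ a j]) => [j /andP[jN ajf]|h0].
    by exists j => //; apply/negbTE.
  exfalso; move: si; rewrite /served ai /= ltnNge; move/negP; apply.
  apply: (leq_trans (card_Nstar hpo hkn)); apply: subset_leq_card.
  apply/subsetP => j hj; rewrite inE (Nstar_prec hpo hj) ?hi // andbT.
  by move: (h0 j); rewrite /= hj /= => /negbFE.
have hj1 : 1 <= `|s - x j|.
  have := hne j true; rewrite /utility devi ajf servN ?devi // => hh.
  by rewrite -subr_le0.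
have pji : pr j i by apply: (Nstar_prec hpo jN); rewrite hi.
have hij : `|s - x j| <= `|s - x i|.
  rewrite leNgt; apply/negP => /hd hpr.
  by move: (pr_asym hpo _ _ pji); rewrite hpr.
have := d1 i; lra.
Qed.
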